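(* Fix $b>1$ and $(a,E,c)\in\mathcal{B}$, let $\mu=\mu(\cdot;a,E,c)$ be the associated $T$-periodic even traveling wave profile, and let $\mu_+(a,E,c):=\mu(0;a,E,c)$ denote the global maximum of $\mu$. Then $\mu_{xx}(0)<0$ and \[ \{\mu_+,\omega_1\}_{E,c}>0. \]
   Context: Fix $b>1$. For $c>0$, $a>0$, $\varphi<c$ let $V(\varphi;a,c)=-\tfrac12\varphi^2+\frac{a}{(b-1)(c-\varphi)^{b-1}}$. For $0<a<\frac{b^bc^{b+1}}{(b+1)^{b+1}}$ the equation $\varphi(c-\varphi)^b=a$ has exactly two solutions $\varphi_1\in(0,\frac{c}{b+1})$, $\varphi_2\in(\frac{c}{b+1},c)$. Let $\mathcal{B}=\{(a,E,c): c>0,\ 0<a<\frac{b^bc^{b+1}}{(b+1)^{b+1}},\ V(\varphi_2;a,c)<E<V(\varphi_1;a,c)\}$. For $(a,E,c)\in\mathcal{B}$ let $\varphi(\cdot;a,E,c)$ be the smooth periodic solution of $\tfrac12(\varphi')^2=E-V(\varphi;a,c)$ with $\varphi<c$, translated so that it is even with its maximum at $x=0$; it satisfies $\varphi-\varphi''=a/(c-\varphi)^b$, and $u(x,t)=\varphi(x-ct)$ is a traveling wave of $u_t-u_{txx}+(b+1)uu_x=bu_xu_{xx}+uu_{xxx}$. Set $\mu(x;a,E,c)=a/(c-\varphi(x;a,E,c))^b$ (the momentum density), a traveling wave of $m_t+um_x+bmu_x=0$. Let $\omega_1(a,E,c)=\frac{1}{2a^{1/b}}[2(b-1)E+(b-1)c^2]$.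 Jacobian notation: $\{f,g\}_{E,c}=f_Eg_c-f_cg_E$, with $f,g$ regarded as functions of $(a,E,c)$. *)

(* Defs.v *)
From Stdlib Require Import Reals Lra.
From Coquelicot Require Import Coquelicot.
Open Scope R_scope.

Definition Vpot (b a c p : R) : R :=
  - (p ^ 2) / 2 + a / ((b - 1) * Rpower (c - p) (b - 1)).

Definition inB (b a E c : R) : Prop :=
  0 < c /\ 0 < a /\ a < Rpower b b * Rpower c (b + 1) / Rpower (b + 1) (b + 1) /\
  exists p1 p2 : R,
    0 < p1 < c / (b + 1) /\ c / (b + 1) < p2 < c /\
    p1 * Rpower (c - p1) b = a /\ p2 * Rpower (c - p2) b = a /\
    Vpot b a c p2 < E < Vpot b a c p1.

Definition is_profile (b a E c : R) (f : R -> R) : Prop :=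
  (forall (n : nat) (x : R), ex_derive_n f n x) /\
  (forall x, f x < c) /\
  (forall x, / 2 * (Derive f x) ^ 2 = E - Vpot b a c (f x)) /\
  (forall x, f x - Derive_n f 2 x = a / Rpower (c - f x) b) /\
  (exists T : R, 0 < T /\ forall x, f (x + T) = f x) /\
  (forall x, f (- x) = f x) /\
  (forall x, f x <= f 0).

Definition mu_of (b a c : R) (f : R -> R) (x : R) : R := a / Rpower (c - f x) b.

Definition mu_plus (b : R) (phi : R -> R -> R -> R -> R) (a E c : R) : R :=
  mu_of b a c (phi a E c) 0.

Definition omega1 (b a E c : R) : R :=
  (2 * (b - 1) * E + (b - 1) * c ^ 2) / (2 * Rpower a (1 / b)).

(* Main.v *)
Require Import Defs.
From Stdlib Require Import Reals.
From Coquelicot Require Import Coquelicot.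
Open Scope R_scope.
From Stdlib Require Import Lra Psatz.


Lemma ballR x (e : posreal) y : ball x e y <-> Rabs (y - x) < e.
Proof. reflexivity. Qed.

Lemma is_derive_eq (f : R -> R) x l l' : is_derive f x l -> l = l' -> is_derive f x l'.
Proof. intros H ->; exact H. Qed.

Lemma incr_strict (f f' : R -> R) x y : x < y ->
  (forall t, x <= t <= y -> is_derive f t (f' t)) ->
  (forall t, x < t < y -> 0 < f' t) -> f x < f y.
Proof.
  intros Hxy Hd Hp.
  destruct (MVT_cor2 f f' x y Hxy) as [t [Ht1 Ht2]].
  - intros t Ht. apply is_derive_Reals. now apply Hd.
  - assert (0 < f' t * (y - x)) by (apply Rmult_lt_0_compat; [apply Hp; lra| lra]). lra.
Qed.

Lemma decr_strict (f f' : R -> R) x y : x < y ->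
  (forall t, x <= t <= y -> is_derive f t (f' t)) ->
  (forall t, x < t < y -> f' t < 0) -> f y < f x.
Proof.
  intros Hxy Hd Hp.
  assert (H := incr_strict (fun t => - f t) (fun t => - f' t) x y Hxy).
  cut (- f x < - f y). lra. apply H.
  - intros t Ht. apply is_derive_Reals.
    exact (derivable_pt_lim_opp f t (f' t) (proj1 (is_derive_Reals _ _ _) (Hd t Ht))).
  - intros t Ht. specialize (Hp t Ht). lra.
Qed.

Lemma cont_of_derive (f : R -> R) x : ex_derive f x -> continuity_pt f x.
Proof. intros H. apply continuity_pt_filterlim. exact (@ex_derive_continuous R_AbsRing R_NormedModule f x H). Qed.

Lemma loc_gt (f : R -> R) x K : ex_derive f x -> K < f x -> locally x (fun y => K < f y).
Proof.
  intros Hd HK. apply cont_of_derive, continuity_pt_filterlim in Hd.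
  apply (Hd (fun z => K < z)). assert (He : 0 < f x - K) by lra.
  exists (mkposreal _ He). intros z Hz. rewrite ballR in Hz. simpl in Hz.
  apply Rabs_def2 in Hz. lra.
Qed.

Lemma loc_lt (f : R -> R) x K : ex_derive f x -> f x < K -> locally x (fun y => f y < K).
Proof.
  intros Hd HK. apply cont_of_derive, continuity_pt_filterlim in Hd.
  apply (Hd (fun z => z < K)). assert (He : 0 < K - f x) by lra.
  exists (mkposreal _ He). intros z Hz. rewrite ballR in Hz. simpl in Hz.
  apply Rabs_def2 in Hz. lra.
Qed.

Lemma loc_near x e : 0 < e -> locally x (fun y => Rabs (y - x) < e).
Proof. intros He. exists (mkposreal _ He). intros y Hy. exact Hy. Qed.

Lemma inv_deriv (h u : R -> R) (y0 d : R) :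
  locally y0 (fun y => h (u y) = y) ->
  (forall eps, 0 < eps -> locally y0 (fun y => Rabs (u y - u y0) < eps)) ->
  is_derive h (u y0) d -> d <> 0 -> is_derive u y0 (/ d).
Proof.
  intros Hinv Hcont Hd Hd0.
  apply is_derive_Reals. apply is_derive_Reals in Hd.
  intros eps Heps.
  assert (Had : 0 < Rabs d) by (apply Rabs_pos_lt; exact Hd0).
  set (eta := Rmin (Rabs d / 2) (eps * (Rabs d * Rabs d) / 2)).
  assert (Heta : 0 < eta).
  { unfold eta. apply Rmin_pos. lra. apply Rmult_lt_0_compat; [|lra].
    apply Rmult_lt_0_compat; [lra|]. nra. }
  destruct (Hd eta Heta) as [dh Hdh].
  destruct (Hcont dh (cond_pos dh)) as [d1 Hd1].
  destruct Hinv as [d2 Hd2].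
  assert (Hm : 0 < Rmin d1 d2) by (apply Rmin_pos; apply cond_pos).
  exists (mkposreal _ Hm). intros k Hk0 Hk. simpl in Hk.
  assert (Hk1 : Rabs k < d1) by (eapply Rlt_le_trans; [exact Hk| apply Rmin_l]).
  assert (Hk2 : Rabs k < d2) by (eapply Rlt_le_trans; [exact Hk| apply Rmin_r]).
  assert (B1 : ball y0 d1 (y0 + k)) by (rewrite ballR; replace (y0 + k - y0) with k by ring; exact Hk1).
  assert (B2 : ball y0 d2 (y0 + k)) by (rewrite ballR; replace (y0 + k - y0) with k by ring; exact Hk2).
  assert (B0 : ball y0 d2 y0) by (rewrite ballR; replace (y0 - y0) with 0 by ring; rewrite Rabs_R0; apply cond_pos).
  specialize (Hd1 _ B1). assert (E1 := Hd2 _ B2). assert (E0 := Hd2 _ B0).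
  set (w := u (y0 + k) - u y0) in *.
  assert (Hw0 : w <> 0).
  { intro Hw. apply Hk0. unfold w in Hw. assert (u (y0 + k) = u y0) by lra.
    rewrite H in E1. lra. }
  specialize (Hdh w Hw0 Hd1).
  replace (u y0 + w) with (u (y0 + k)) in Hdh by (unfold w; ring).
  rewrite E1, E0 in Hdh. replace (y0 + k - y0) with k in Hdh by ring.
  set (Q := k / w) in *.
  assert (HQd : Rabs (Q - d) < eta) by exact Hdh.
  assert (HQd1 : Rabs (Q - d) < Rabs d / 2) by (eapply Rlt_le_trans; [exact HQd| apply Rmin_l]).
  assert (HQd2 : Rabs (Q - d) < eps * (Rabs d * Rabs d) / 2) by (eapply Rlt_le_trans; [exact HQd| apply Rmin_r]).
  assert (HQ : Rabs d / 2 < Rabs Q).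
  { assert (Rabs d <= Rabs Q + Rabs (Q - d)).
    { replace d with (Q - (Q - d)) at 1 by ring.
      eapply Rle_trans. apply Rabs_triang. rewrite Rabs_Ropp. lra. }
    lra. }
  assert (HQ0 : Q <> 0). { intro H0. rewrite H0, Rabs_R0 in HQ. lra. }
  replace (w / k - / d) with ((d - Q) / (Q * d)).
  2:{ unfold Q. field. repeat split; assumption. }
  rewrite Rabs_div. 2:{ apply Rmult_integral_contrapositive; split; assumption. }
  rewrite Rabs_mult. rewrite <- Rabs_Ropp. replace (- (d - Q)) with (Q - d) by ring.
  apply Rlt_div_l. apply Rmult_lt_0_compat; lra.
  apply Rlt_le_trans with (eps * (Rabs d * Rabs d) / 2). exact HQd2.
  assert (0 <= eps * Rabs d) by nra.
  nra.
Qed.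

Definition gg (b c p : R) : R := p * Rpower (c - p) b.
Definition Wf (b a w : R) : R := a / ((b - 1) * Rpower w (b - 1)).
Definition dV (b a c p : R) : R := - p + a / Rpower (c - p) b.

Lemma Rp_pos x y : 0 < Rpower x y.
Proof. unfold Rpower. apply exp_pos. Qed.

Lemma Rp_m1 w s : 0 < w -> Rpower w (s - 1) = Rpower w s / w.
Proof.
  intros Hw. replace s with ((s - 1) + 1) at 2 by ring.
  rewrite Rpower_plus, Rpower_1 by exact Hw. field. lra.
Qed.

Lemma D0 w s : 0 < w -> is_derive (fun w => Rpower w s) w (s * Rpower w (s - 1)).
Proof. intros Hw. apply is_derive_Reals. now apply derivable_pt_lim_power. Qed.

Lemma D1 c p s : 0 < c - p ->
  is_derive (fun q => Rpower (c - q) s) p (- (s * Rpower (c - p) (s - 1))).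
Proof.
  intros H.
  assert (Hl : is_derive (fun q => c - q) p (-1)) by (auto_derive; [exact I| simpl; field]).
  eapply is_derive_eq.
  - apply (is_derive_comp (fun w => Rpower w s) (fun q => c - q)). apply D0; exact H. exact Hl.
  - unfold scal; simpl; unfold mult; simpl. ring.
Qed.

Lemma D1c c p s : 0 < c - p ->
  is_derive (fun c' => Rpower (c' - p) s) c (s * Rpower (c - p) (s - 1)).
Proof.
  intros H.
  assert (Hl : is_derive (fun q => q - p) c 1) by (auto_derive; [exact I| simpl; field]).
  eapply is_derive_eq.
  - apply (is_derive_comp (fun w => Rpower w s) (fun q => q - p)). apply D0; exact H. exact Hl.
  - unfold scal; simpl; unfold mult; simpl. ring.
Qed.

Lemma DW b a w : 1 < b -> 0 < w -> is_derive (Wf b a) w (- (a / Rpower w b)).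
Proof.
  intros Hb Hw.
  assert (H := D0 w (b - 1) Hw).
  assert (Hi := is_derive_inv _ _ _ H (Rgt_not_eq _ _ (Rp_pos w (b - 1)))).
  assert (Hs := is_derive_scal _ _ (a / (b - 1)) _ Hi).
  eapply is_derive_ext; [| eapply is_derive_eq; [exact Hs|]].
  - intros t. unfold Wf. simpl. field. split. apply Rgt_not_eq, Rp_pos. lra.
  - simpl. rewrite (Rp_m1 w (b - 1)) by exact Hw.
    replace (Rpower w b) with (Rpower w (b - 1) * w).
    2:{ rewrite (Rp_m1 w b) by exact Hw. field. lra. }
    assert (0 < Rpower w (b - 1)) by apply Rp_pos.
    field. repeat split; lra.
Qed.

Lemma Vpot_W b a c p : Vpot b a c p = - (p ^ 2) / 2 + Wf b a (c - p).
Proof. reflexivity. Qed.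

Lemma DV b a c p : 1 < b -> p < c -> is_derive (Vpot b a c) p (dV b a c p).
Proof.
  intros Hb Hp.
  assert (Hl : is_derive (fun q => c - q) p (-1)) by (auto_derive; [exact I| simpl; field]).
  assert (HW := is_derive_comp (Wf b a) (fun q => c - q) p _ _ (DW b a (c - p) Hb ltac:(lra)) Hl).
  assert (Hq : is_derive (fun q => - (q ^ 2) / 2) p (- p)) by (auto_derive; [exact I| simpl; field]).
  eapply is_derive_ext; [| eapply is_derive_eq; [apply (is_derive_plus _ _ _ _ _ Hq HW)|]].
  - intros t. rewrite Vpot_W. reflexivity.
  - unfold dV, plus, scal; simpl; unfold mult; simpl. ring.
Qed.

Lemma dV_g b a c p : p < c -> dV b a c p = (a - gg b c p) / Rpower (c - p) b.
Proof.
  intros Hp. unfold dV, gg. assert (0 < Rpower (c - p) b) by apply Rp_pos. field. lra.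
Qed.

Lemma Dg b c p : p < c ->
  is_derive (gg b c) p (Rpower (c - p) (b - 1) * (c - (b + 1) * p)).
Proof.
  intros Hp. unfold gg.
  eapply is_derive_eq.
  - apply (is_derive_mult (fun q => q) (fun q => Rpower (c - q) b)).
    + apply is_derive_id.
    + apply D1. lra.
    + intros; apply Rmult_comm.
  - unfold plus, scal; simpl; unfold mult; simpl. unfold one; simpl.
    rewrite (Rp_m1 (c - p) b) by lra. field. lra.
Qed.

Lemma cb1_lt b c : 1 < b -> 0 < c -> 0 < c / (b + 1) < c.
Proof.
  intros Hb Hc. split. apply Rdiv_lt_0_compat; lra.
  apply Rmult_lt_reg_l with (b + 1); [lra|].
  replace ((b + 1) * (c / (b + 1))) with c by (field; lra). nra.
Qed.

Lemma lt_cb1 b c t : 1 < b -> t < c / (b + 1) -> (b + 1) * t < c.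
Proof.
  intros Hb Ht. apply Rlt_le_trans with ((b + 1) * (c / (b + 1))).
  apply Rmult_lt_compat_l; lra. right; field; lra.
Qed.

Lemma gt_cb1 b c t : 1 < b -> c / (b + 1) < t -> c < (b + 1) * t.
Proof.
  intros Hb Ht. apply Rle_lt_trans with ((b + 1) * (c / (b + 1))).
  right; field; lra. apply Rmult_lt_compat_l; lra.
Qed.

Lemma g_incr b c x y : 1 < b -> 0 < c -> x < y -> y <= c / (b + 1) -> gg b c x < gg b c y.
Proof.
  intros Hb Hc Hxy Hy. pose proof (cb1_lt b c Hb Hc).
  apply (incr_strict _ (fun p => Rpower (c - p) (b - 1) * (c - (b + 1) * p))); auto.
  - intros t Ht. apply Dg. lra.
  - intros t Ht. apply Rmult_lt_0_compat. apply Rp_pos.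
    assert ((b + 1) * t < c) by (apply lt_cb1; lra). lra.
Qed.

Lemma g_decr b c x y : 1 < b -> 0 < c -> x < y -> c / (b + 1) <= x -> y < c -> gg b c y < gg b c x.
Proof.
  intros Hb Hc Hxy Hx Hyc. pose proof (cb1_lt b c Hb Hc).
  apply (decr_strict _ (fun p => Rpower (c - p) (b - 1) * (c - (b + 1) * p))); auto.
  - intros t Ht. apply Dg. lra.
  - intros t Ht. assert (c < (b + 1) * t) by (apply gt_cb1; lra).
    assert (0 < Rpower (c - t) (b - 1)) by apply Rp_pos. nra.
Qed.

Lemma g_nonpos b c t : t <= 0 -> gg b c t <= 0.
Proof. intros Ht. unfold gg. pose proof (Rp_pos (c - t) b). nra. Qed.

Definition wit (b a c p1 p2 : R) : Prop :=
  0 < c /\ 0 < a /\ 0 < p1 < c / (b + 1) /\ c / (b + 1) < p2 < c /\ gg b c p1 = a /\ gg b c p2 = a.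

Lemma gsign1 b a c p1 p2 t : 1 < b -> wit b a c p1 p2 -> t < p1 -> gg b c t < a.
Proof.
  intros Hb (Hc & Ha & H1 & H2 & G1 & G2) Ht.
  destruct (Rle_lt_dec t 0).
  - pose proof (g_nonpos b c t r). lra.
  - rewrite <- G1. apply g_incr; lra.
Qed.

Lemma gsign2 b a c p1 p2 t : 1 < b -> wit b a c p1 p2 -> p1 < t < p2 -> a < gg b c t.
Proof.
  intros Hb (Hc & Ha & H1 & H2 & G1 & G2) Ht.
  destruct (Rle_lt_dec t (c / (b + 1))).
  - rewrite <- G1. apply g_incr; lra.
  - rewrite <- G2. apply g_decr; lra.
Qed.

Lemma gsign3 b a c p1 p2 t : 1 < b -> wit b a c p1 p2 -> p2 < t < c -> gg b c t < a.
Proof.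
  intros Hb (Hc & Ha & H1 & H2 & G1 & G2) Ht.
  rewrite <- G2. apply g_decr; lra.
Qed.

Lemma groots b a c p1 p2 t : 1 < b -> wit b a c p1 p2 -> t < c -> gg b c t = a -> t = p1 \/ t = p2.
Proof.
  intros Hb W Ht Hg.
  destruct (Rtotal_order t p1) as [H|[H|H]]; [|now left|].
  - pose proof (gsign1 _ _ _ _ _ _ Hb W H). lra.
  - destruct (Rtotal_order t p2) as [H'|[H'|H']]; [|now right|].
    + pose proof (gsign2 _ _ _ _ _ t Hb W (conj H H')). lra.
    + pose proof (gsign3 _ _ _ _ _ t Hb W (conj H' Ht)). lra.
Qed.

Lemma V_inc1 b a c p1 p2 x y : 1 < b -> wit b a c p1 p2 -> x < y -> y <= p1 ->
  Vpot b a c x < Vpot b a c y.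
Proof.
  intros Hb W Hxy Hy. pose proof W as (Hc & Ha & H1 & H2 & G1 & G2).
  apply (incr_strict _ (dV b a c)); auto.
  - intros t Ht. apply DV; lra.
  - intros t Ht. rewrite dV_g by lra. apply Rdiv_lt_0_compat; [|apply Rp_pos].
    pose proof (gsign1 _ _ _ _ _ t Hb W ltac:(lra)). lra.
Qed.

Lemma V_dec b a c p1 p2 x y : 1 < b -> wit b a c p1 p2 -> x < y -> p1 <= x -> y <= p2 ->
  Vpot b a c y < Vpot b a c x.
Proof.
  intros Hb W Hxy Hx Hy. pose proof W as (Hc & Ha & H1 & H2 & G1 & G2).
  apply (decr_strict _ (dV b a c)); auto.
  - intros t Ht. apply DV; lra.
  - intros t Ht. rewrite dV_g by lra.
    pose proof (gsign2 _ _ _ _ _ t Hb W ltac:(lra)).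
    pose proof (Rp_pos (c - t) b).
    unfold Rdiv. apply Rmult_neg_pos; [lra| apply Rinv_0_lt_compat; lra].
Qed.

Lemma V_inc2 b a c p1 p2 x y : 1 < b -> wit b a c p1 p2 -> x < y -> p2 <= x -> y < c ->
  Vpot b a c x < Vpot b a c y.
Proof.
  intros Hb W Hxy Hx Hy. pose proof W as (Hc & Ha & H1 & H2 & G1 & G2).
  apply (incr_strict _ (dV b a c)); auto.
  - intros t Ht. apply DV; lra.
  - intros t Ht. rewrite dV_g by lra. apply Rdiv_lt_0_compat; [|apply Rp_pos].
    pose proof (gsign3 _ _ _ _ _ t Hb W ltac:(lra)). lra.
Qed.

Lemma Derive_max0 (f : R -> R) x lo hi : ex_derive f x -> lo < x < hi ->
  (forall y, lo < y < hi -> f y <= f x) -> Derive f x = 0.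
Proof.
  intros Hd Hx Hm. rewrite <- (Derive_Reals f x (ex_derive_Reals_0 f x Hd)).
  apply (deriv_maximum f lo hi x); try lra. intros y H1 H2; apply Hm; lra.
Qed.

Lemma Derive_min0 (f : R -> R) x lo hi : ex_derive f x -> lo < x < hi ->
  (forall y, lo < y < hi -> f x <= f y) -> Derive f x = 0.
Proof.
  intros Hd Hx Hm. rewrite <- (Derive_Reals f x (ex_derive_Reals_0 f x Hd)).
  apply (deriv_minimum f lo hi x); try lra. intros y H1 H2; apply Hm; lra.
Qed.

Lemma maxA b a E c p1 p2 f : 1 < b -> wit b a c p1 p2 ->
  Vpot b a c p2 < E < Vpot b a c p1 -> is_profile b a E c f ->
  p2 < f 0 < c /\ Vpot b a c (f 0) = E.
Proof.
  intros Hb W HE (Hder & Hlt & Hen & Hode & (T & HT & Hper) & Hev & Hmax).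
  pose proof W as (Hc & Ha & H1 & H2 & G1 & G2).
  assert (Hd : forall x, ex_derive f x) by (intros x; exact (Hder 1%nat x)).
  assert (Hcont : continuity f) by (intros x; apply cont_of_derive, Hd).
  assert (HV0 : Vpot b a c (f 0) = E).
  { assert (D0' : Derive f 0 = 0).
    { apply (Derive_max0 f 0 (-1) 1); auto; lra. }
    specialize (Hen 0). rewrite D0' in Hen. lra. }
  split; [|exact HV0]. split; [|apply Hlt].
  assert (FT : f T = f 0) by (rewrite <- (Hper 0); f_equal; ring).
  assert (F2T : f (2 * T) = f 0) by (rewrite <- FT, <- (Hper T); f_equal; ring).
  destruct (continuity_ab_min f 0 (2 * T) ltac:(lra) (fun y _ => Hcont y)) as [xm [Hxm1 Hxm2]].
  assert (Hxs : exists xs, 0 < xs < 2 * T /\ forall y, 0 <= y <= 2 * T -> f xs <= f y).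
  { destruct (Rle_lt_dec xm 0).
    - exists T. split. lra. intros y Hy. assert (xm = 0) by lra. subst xm.
      rewrite FT. now apply Hxm1.
    - destruct (Rle_lt_dec (2 * T) xm).
      + exists T. split. lra. intros y Hy. assert (xm = 2 * T) by lra. subst xm.
        rewrite FT, <- F2T. now apply Hxm1.
      + exists xm. split. lra. exact Hxm1. }
  destruct Hxs as [xs [Hxs1 Hxs2]].
  set (M := f 0) in *. set (m := f xs).
  assert (Hm : Vpot b a c m = E).
  { assert (Derive f xs = 0).
    { apply (Derive_min0 f xs 0 (2 * T)); auto. intros y Hy; apply Hxs2; lra. }
    specialize (Hen xs). rewrite H in Hen. unfold m. lra. }
  assert (HmM : m <= M) by apply Hmax.
  assert (Hbetw : forall y, m <= y <= M -> Vpot b a c y <= E).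
  { intros y Hy.
    destruct (IVT_gen f 0 xs y Hcont) as [x [_ Hx]].
    { unfold m, M in *. rewrite Rmin_right, Rmax_left by lra. lra. }
    rewrite <- Hx. specialize (Hen x). pose proof (pow2_ge_0 (Derive f x)). nra. }
  destruct (Req_dec m M) as [Heq|Hne].
  - exfalso.
    assert (Hconst : forall y, 0 < y < 2 * T -> f y = M).
    { intros y Hy. apply Rle_antisym. apply Hmax. rewrite <- Heq. apply Hxs2; lra. }
    assert (Hloc : locally T (fun t => f t = M)).
    { exists (mkposreal _ HT). intros t Ht. rewrite ballR in Ht. simpl in Ht.
      apply Rabs_def2 in Ht. apply Hconst. lra. }
    assert (HD2 : Derive_n f 2 T = 0).
    { rewrite (Derive_n_ext_loc f (fun _ => M) 2 T Hloc). apply Derive_n_const. }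
    specialize (Hode T). rewrite HD2, FT in Hode. fold M in Hode.
    assert (HgM : gg b c M = a).
    { unfold gg. pose proof (Rp_pos (c - M) b).
      assert (HM : M = a / Rpower (c - M) b) by lra. rewrite HM at 1. field. lra. }
    destruct (groots b a c p1 p2 M Hb W (Hlt 0) HgM) as [->| ->]; lra.
  - assert (HmM' : m < M) by lra.
    destruct (Rlt_le_dec p2 M) as [Hok|Hbad]; [exact Hok|exfalso].
    destruct (Rle_lt_dec M p1).
    + pose proof (V_inc1 b a c p1 p2 m M Hb W HmM' r). lra.
    + destruct (Rle_lt_dec p1 m).
      * pose proof (V_dec b a c p1 p2 m M Hb W HmM' r0 Hbad). lra.
      * pose proof (Hbetw p1 ltac:(lra)). lra.
Qed.

Lemma DK b a c y : y < c ->
  is_derive (fun y => a * Rpower (c - y) (- b)) y (a * (b * Rpower (c - y) (- b - 1))).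
Proof.
  intros Hy. eapply is_derive_eq. apply is_derive_scal. apply D1. lra. simpl. ring.
Qed.

Lemma part1 b a E c p1 p2 f : 1 < b -> wit b a c p1 p2 ->
  Vpot b a c p2 < E < Vpot b a c p1 -> is_profile b a E c f ->
  Derive_n (mu_of b a c f) 2 0 < 0.
Proof.
  intros Hb W HE Hp.
  destruct (maxA b a E c p1 p2 f Hb W HE Hp) as [HM HV].
  destruct Hp as (Hder & Hlt & Hen & Hode & _ & _ & Hmax).
  assert (Hd : forall x, ex_derive f x) by (intros x; exact (Hder 1%nat x)).
  assert (D0' : Derive f 0 = 0) by (apply (Derive_max0 f 0 (-1) 1); auto; lra).
  set (K1 := fun y => a * (b * Rpower (c - y) (- b - 1))).
  assert (Hmu : forall x, Derive (fun y => mu_of b a c f y) x = K1 (f x) * Derive f x).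
  { intros x. apply is_derive_unique.
    eapply is_derive_ext; [| eapply is_derive_eq;
      [apply (is_derive_comp (fun y => a * Rpower (c - y) (- b)) f x); [apply DK, Hlt| apply Derive_correct, Hd]|]].
    - intros t. simpl. unfold mu_of. rewrite Rpower_Ropp. reflexivity.
    - unfold scal; simpl; unfold mult; simpl. unfold K1. ring. }
  change (Derive (fun x => Derive (fun y => mu_of b a c f y) x) 0 < 0).
  assert (Eq : Derive (fun x => Derive (fun y => mu_of b a c f y) x) 0 = Derive (fun x => K1 (f x) * Derive f x) 0) by (apply Derive_ext; exact Hmu).
  rewrite Eq.
  assert (HK : is_derive (fun x => K1 (f x)) 0 (Derive f 0 * (a * (b * (- (- b - 1) * Rpower (c - f 0) (- b - 1 - 1)))))).
  { eapply is_derive_eq.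
    apply (is_derive_comp K1 f 0). unfold K1.
    apply is_derive_scal, is_derive_scal. apply D1. pose proof (Hlt 0); lra.
    apply Derive_correct, Hd.
    unfold scal; simpl; unfold mult; simpl. ring. }
  assert (HD2 : is_derive (fun x => Derive f x) 0 (Derive_n f 2 0)).
  { apply Derive_correct. exact (Hder 2%nat 0). }
  assert (HP : is_derive (fun x => K1 (f x) * Derive f x) 0 (K1 (f 0) * Derive_n f 2 0)).
  { eapply is_derive_eq. exact (is_derive_mult _ _ _ _ _ HK HD2 (fun n m => Rmult_comm n m)).
    unfold plus, mult; simpl. rewrite D0'. ring. }
  assert (HU : Derive (fun x => K1 (f x) * Derive f x) 0 = K1 (f 0) * Derive_n f 2 0)
    by (apply is_derive_unique; exact HP).
  rewrite HU.
  assert (Hf2 : Derive_n f 2 0 = - dV b a c (f 0)) by (unfold dV; specialize (Hode 0); lra).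
  rewrite Hf2, dV_g by apply Hlt.
  pose proof W as (Hc & Ha & H1 & H2 & G1 & G2).
  assert (gg b c (f 0) < a) by (apply (gsign3 b a c p1 p2); auto).
  assert (0 < K1 (f 0)) by (unfold K1; pose proof (Rp_pos (c - f 0) (- b - 1)); 
    apply Rmult_lt_0_compat; [lra| apply Rmult_lt_0_compat; lra]).
  assert (0 < (a - gg b c (f 0)) / Rpower (c - f 0) b) by (apply Rdiv_lt_0_compat; [lra| apply Rp_pos]).
  nra.
Qed.

Definition bnd (b c : R) := Rpower b b * Rpower c (b + 1) / Rpower (b + 1) (b + 1).

Lemma wit_inB b a E c p1 p2 : wit b a c p1 p2 -> Vpot b a c p2 < E < Vpot b a c p1 ->
  a < bnd b c -> inB b a E c.
Proof.
  intros (Hc & Ha & H1 & H2 & G1 & G2) HE Hbd.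
  split; [exact Hc|]. split; [exact Ha|]. split; [exact Hbd|].
  exists p1, p2. repeat split; try lra; assumption.
Qed.

Lemma inB_wit b a E c : inB b a E c ->
  a < bnd b c /\ exists p1 p2, wit b a c p1 p2 /\ Vpot b a c p2 < E < Vpot b a c p1.
Proof.
  intros (Hc & Ha & Hbd & p1 & p2 & H1 & H2 & G1 & G2 & HE).
  split; [exact Hbd|]. exists p1, p2. split; [|exact HE].
  repeat split; try lra; assumption.
Qed.

Lemma DG0 a b w : 0 < w -> is_derive (fun w => a * Rpower w (- b)) w (a * (- b * Rpower w (- b - 1))).
Proof. intros Hw. apply is_derive_scal. apply D0. exact Hw. Qed.

Lemma mu_plus_eq b phi a E c : mu_plus b phi a E c = a * Rpower (c - phi a E c 0) (- b).
Proof. unfold mu_plus, mu_of. rewrite Rpower_Ropp. reflexivity. Qed.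

Lemma Rmin_pos3 x y z : 0 < x -> 0 < y -> 0 < z -> 0 < Rmin x (Rmin y z).
Proof. intros; repeat apply Rmin_pos; auto. Qed.

Lemma part2 b a E c p1 p2 (phi : R -> R -> R -> R -> R) : 1 < b ->
  (forall a E c, inB b a E c -> is_profile b a E c (phi a E c)) ->
  wit b a c p1 p2 -> Vpot b a c p2 < E < Vpot b a c p1 -> a < bnd b c ->
  is_derive (fun E' => mu_plus b phi a E' c) E
    (a * b * Rpower (c - phi a E c 0) (- b - 1) / dV b a c (phi a E c 0)).
Proof.
  intros Hb hphi W HE Hbd.
  pose proof W as (Hc & Ha & H1 & H2 & G1 & G2).
  assert (Hprof : forall E', Vpot b a c p2 < E' < Vpot b a c p1 ->
            p2 < phi a E' c 0 < c /\ Vpot b a c (phi a E' c 0) = E').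
  { intros E' HE'. apply (maxA b a E' c p1 p2); auto. apply hphi.
    apply (wit_inB b a E' c p1 p2); auto. }
  assert (Lloc : locally E (fun E' => Vpot b a c p2 < E' < Vpot b a c p1)).
  { apply filter_and. apply (loc_gt (fun x => x)); [apply ex_derive_id| lra].
    apply (loc_lt (fun x => x)); [apply ex_derive_id| lra]. }
  destruct (Hprof E HE) as [[HM1 HM2] HV0].
  set (M0 := phi a E c 0) in *.
  set (u := fun E' => c - phi a E' c 0).
  assert (Hdv : 0 < dV b a c M0).
  { rewrite dV_g by lra. apply Rdiv_lt_0_compat; [|apply Rp_pos].
    pose proof (gsign3 b a c p1 p2 M0 Hb W ltac:(lra)). lra. }
  assert (Hu : is_derive u E (/ - dV b a c M0)).
  { apply (inv_deriv (fun w => Vpot b a c (c - w))).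
    - eapply filter_imp; [| exact Lloc]. intros E' HE'.
      destruct (Hprof E' HE') as [_ HV]. unfold u.
      replace (c - (c - phi a E' c 0)) with (phi a E' c 0) by ring. exact HV.
    - intros eps Heps.
      set (e := Rmin (eps / 2) (Rmin ((M0 - p2) / 2) ((c - M0) / 2))).
      assert (He : 0 < e) by (apply Rmin_pos3; lra).
      assert (He1 : e <= eps / 2) by apply Rmin_l.
      assert (He2 : e <= (M0 - p2) / 2) by (eapply Rle_trans; [apply Rmin_r| apply Rmin_l]).
      assert (He3 : e <= (c - M0) / 2) by (eapply Rle_trans; [apply Rmin_r| apply Rmin_r]).
      assert (Vlo : Vpot b a c (M0 - e) < E).
      { rewrite <- HV0. apply (V_inc2 b a c p1 p2); auto; lra. }
      assert (Vhi : E < Vpot b a c (M0 + e)).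
      { rewrite <- HV0. apply (V_inc2 b a c p1 p2); auto; lra. }
      assert (L2 : locally E (fun E' => Vpot b a c (M0 - e) < E' < Vpot b a c (M0 + e))).
      { apply filter_and. apply (loc_gt (fun x => x)); [apply ex_derive_id| lra].
        apply (loc_lt (fun x => x)); [apply ex_derive_id| lra]. }
      eapply filter_imp; [| exact (filter_and _ _ Lloc L2)].
      intros E' [HE' [Hl Hh]].
      destruct (Hprof E' HE') as [[HM1' HM2'] HV'].
      set (M' := phi a E' c 0) in *.
      assert (M0 - e < M').
      { destruct (Rlt_le_dec (M0 - e) M') as [ok|bad]; [exact ok|exfalso].
        destruct (Rle_lt_or_eq_dec _ _ bad) as [lt|eq].
        - pose proof (V_inc2 b a c p1 p2 M' (M0 - e) Hb W lt ltac:(lra) ltac:(lra)). lra.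
        - rewrite eq in HV'. lra. }
      assert (M' < M0 + e).
      { destruct (Rlt_le_dec M' (M0 + e)) as [ok|bad]; [exact ok|exfalso].
        destruct (Rle_lt_or_eq_dec _ _ bad) as [lt|eq].
        - pose proof (V_inc2 b a c p1 p2 (M0 + e) M' Hb W lt ltac:(lra) ltac:(lra)). lra.
        - rewrite <- eq in HV'. lra. }
      unfold u. fold M'. fold M0. apply Rabs_def1; lra.
    - eapply is_derive_eq.
      apply (is_derive_comp (Vpot b a c) (fun w => c - w) (u E) (dV b a c M0) (-1)).
      replace (c - u E) with M0 by (unfold u; fold M0; ring).
      apply DV. exact Hb. lra.
      auto_derive; [exact I| simpl; ring].
      unfold scal; simpl; unfold mult; simpl. unfold u. fold M0.
      replace (c - (c - M0)) with M0 by ring. ring.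
    - lra. }
  eapply is_derive_ext; [intros t; symmetry; apply mu_plus_eq|].
  eapply is_derive_eq.
  apply (is_derive_comp (fun w => a * Rpower w (- b)) u). apply DG0. unfold u; fold M0; lra.
  exact Hu.
  unfold scal; simpl; unfold mult; simpl. unfold u; fold M0. field. lra.
Qed.

Lemma g_cont b c p : p < c -> continuity_pt (gg b c) p.
Proof. intros Hp. apply cont_of_derive. eexists. apply Dg. exact Hp. Qed.

Lemma openB b a E c p1 p2 q : 1 < b -> wit b a c p1 p2 ->
  Vpot b a c p2 < E < Vpot b a c p1 -> p2 < q < c ->
  locally c (fun c' => exists p1' p2', wit b a c' p1' p2' /\ p2' < q /\
     Vpot b a c' p2' < E < Vpot b a c' p1').
Proof.
  intros Hb W HE Hq. pose proof W as (Hc & Ha & H1 & H2 & G1 & G2).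
  pose proof (cb1_lt b c Hb Hc) as Hcb.
  assert (L0 : locally c (fun c' => 0 < c')).
  { apply (loc_gt (fun x => x)); [apply ex_derive_id| lra]. }
  assert (L1 : locally c (fun c' => p1 < c' / (b + 1))).
  { apply (loc_gt (fun x => x / (b + 1))); [auto_derive; exact I| lra]. }
  assert (L2 : locally c (fun c' => c' / (b + 1) < p2)).
  { apply (loc_lt (fun x => x / (b + 1))); [auto_derive; exact I| lra]. }
  assert (L3 : locally c (fun c' => q < c')).
  { apply (loc_gt (fun x => x)); [apply ex_derive_id| lra]. }
  assert (L4 : locally c (fun c' => a < gg b c' (c' / (b + 1)))).
  { apply (loc_gt (fun c' => gg b c' (c' / (b + 1)))).
    - unfold gg, Rpower. auto_derive. lra.
    - rewrite <- G1. apply g_incr; lra. }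
  assert (L5 : locally c (fun c' => gg b c' q < a)).
  { apply (loc_lt (fun c' => gg b c' q)).
    - unfold gg, Rpower. auto_derive. lra.
    - apply (gsign3 b a c p1 p2); auto. }
  assert (L6 : locally c (fun c' => Vpot b a c' p2 < E)).
  { apply (loc_lt (fun c' => Vpot b a c' p2)).
    - unfold Vpot, Rpower. auto_derive. split. lra. split; [|exact I].
      apply Rmult_integral_contrapositive; split; [lra| apply Rgt_not_eq, exp_pos].
    - lra. }
  assert (L7 : locally c (fun c' => E < Vpot b a c' p1)).
  { apply (loc_gt (fun c' => Vpot b a c' p1)).
    - unfold Vpot, Rpower. auto_derive. split. lra. split; [|exact I].
      apply Rmult_integral_contrapositive; split; [lra| apply Rgt_not_eq, exp_pos].
    - lra. }
  repeat match goal with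
  | A : locally c ?P, B : locally c ?Q |- _ =>
      let C := fresh "L" in assert (C := filter_and _ _ A B); clear A B
  end.
  match goal with A : locally c _ |- _ => eapply filter_imp; [| exact A] end.
  intros c' Hs. simpl in Hs.
  repeat match goal with
  | H : _ /\ _ |- _ => destruct H
  end.
  destruct (Ranalysis5.IVT_interv (fun p => gg b c' p - a) 0 (c' / (b + 1))) as [z1 [Hz1 Ez1]].
  { intros t Ht. apply continuity_pt_minus. apply g_cont. pose proof (cb1_lt b c' Hb ltac:(assumption)). lra.
    apply continuity_pt_const. intros x y; reflexivity. }
  { apply Rdiv_lt_0_compat; lra. }
  { unfold gg. rewrite Rmult_0_l. lra. }
  { lra. }
  destruct (Ranalysis5.IVT_interv (fun p => a - gg b c' p) (c' / (b + 1)) q) as [z2 [Hz2 Ez2]].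
  { intros t Ht. apply continuity_pt_minus. apply continuity_pt_const. intros x y; reflexivity.
    apply g_cont. lra. }
  { lra. }
  { lra. }
  { lra. }
  simpl in Ez1, Ez2.
  assert (z1 <> 0). { intro Z. rewrite Z in Ez1. unfold gg in Ez1. lra. }
  assert (z1 <> c' / (b + 1)). { intro Z. rewrite Z in Ez1. lra. }
  assert (z2 <> c' / (b + 1)). { intro Z. rewrite Z in Ez2. lra. }
  assert (z2 <> q). { intro Z. rewrite Z in Ez2. lra. }
  assert (W' : wit b a c' z1 z2).
  { repeat split; try lra. }
  exists z1, z2. split; [exact W'|]. split; [lra|]. split.
  - destruct (Rtotal_order p2 z2) as [lt|[eq|gt]].
    + pose proof (V_dec b a c' z1 z2 p2 z2 Hb W' lt ltac:(lra) ltac:(lra)). lra.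
    + subst. lra.
    + pose proof (V_inc2 b a c' z1 z2 z2 p2 Hb W' gt ltac:(lra) ltac:(lra)). lra.
  - destruct (Rtotal_order p1 z1) as [lt|[eq|gt]].
    + pose proof (V_inc1 b a c' z1 z2 p1 z1 Hb W' lt ltac:(lra)). lra.
    + subst. lra.
    + pose proof (V_dec b a c' z1 z2 z1 p1 Hb W' gt ltac:(lra) ltac:(lra)). lra.
Qed.

Lemma Vc_deriv b a c p : 1 < b -> p < c -> ex_derive (fun c' => Vpot b a c' p) c.
Proof.
  intros Hb Hp. unfold Vpot, Rpower. auto_derive. split. lra. split; [|exact I].
  apply Rmult_integral_contrapositive; split; [lra| apply Rgt_not_eq, exp_pos].
Qed.

Lemma part3 b a E c p1 p2 (phi : R -> R -> R -> R -> R) : 1 < b ->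
  (forall a E c, inB b a E c -> is_profile b a E c (phi a E c)) ->
  wit b a c p1 p2 -> Vpot b a c p2 < E < Vpot b a c p1 -> a < bnd b c ->
  is_derive (fun c' => mu_plus b phi a E c') c
    (a * b * Rpower (c - phi a E c 0) (- b - 1) * phi a E c 0 / dV b a c (phi a E c 0)).
Proof.
  intros Hb hphi W HE Hbd.
  pose proof W as (Hc & Ha & H1 & H2 & G1 & G2).
  assert (Lbd : locally c (fun c' => a < bnd b c')).
  { apply (loc_gt (fun c' => bnd b c')); [| exact Hbd]. unfold bnd, Rpower. auto_derive. lra. }
  assert (Hmax : forall c' p1' p2', wit b a c' p1' p2' -> Vpot b a c' p2' < E < Vpot b a c' p1' ->
             a < bnd b c' -> p2' < phi a E c' 0 < c' /\ Vpot b a c' (phi a E c' 0) = E).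
  { intros c' p1' p2' W' HE' Hbd'. apply (maxA b a E c' p1' p2'); auto. apply hphi.
    apply (wit_inB b a E c' p1' p2'); auto. }
  destruct (Hmax c p1 p2 W HE Hbd) as [[HM1 HM2] HV0].
  set (M0 := phi a E c 0) in *.
  assert (HM0 : 0 < M0) by (pose proof (cb1_lt b c Hb Hc); lra).
  set (u := fun c' => c' - phi a E c' 0).
  set (h := fun w => w + sqrt (2 * (Wf b a w - E))).
  assert (Hdv : 0 < dV b a c M0).
  { rewrite dV_g by lra. apply Rdiv_lt_0_compat; [|apply Rp_pos].
    pose proof (gsign3 b a c p1 p2 M0 Hb W ltac:(lra)). lra. }
  assert (Hhu : forall c' p1' p2', wit b a c' p1' p2' -> Vpot b a c' p2' < E < Vpot b a c' p1' ->
             a < bnd b c' -> h (u c') = c').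
  { intros c' p1' p2' W' HE' Hbd'.
    destruct (Hmax c' p1' p2' W' HE' Hbd') as [[Hm1 Hm2] HV].
    pose proof W' as (Hc' & _ & _ & H2' & _).
    pose proof (cb1_lt b c' Hb Hc').
    unfold h, u. rewrite Vpot_W in HV.
    replace (2 * (Wf b a (c' - phi a E c' 0) - E)) with (phi a E c' 0 ^ 2) by lra.
    rewrite sqrt_pow2 by lra. ring. }
  assert (Hu : is_derive u c (/ (- dV b a c M0 / M0))).
  { apply (inv_deriv h).
    - assert (Lq := openB b a E c p1 p2 ((p2 + c) / 2) Hb W HE ltac:(lra)).
      eapply filter_imp; [| exact (filter_and _ _ Lq Lbd)].
      intros c' [[p1' [p2' [W' [_ HE']]]] Hbd']. exact (Hhu c' p1' p2' W' HE' Hbd').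
    - intros eps Heps.
      set (e := Rmin (eps / 2) (Rmin ((M0 - p2) / 2) ((c - M0) / 2))).
      assert (He : 0 < e) by (apply Rmin_pos3; lra).
      assert (He1 : e <= eps / 2) by apply Rmin_l.
      assert (He2 : e <= (M0 - p2) / 2) by (eapply Rle_trans; [apply Rmin_r| apply Rmin_l]).
      assert (He3 : e <= (c - M0) / 2) by (eapply Rle_trans; [apply Rmin_r| apply Rmin_r]).
      assert (Vlo : Vpot b a c (M0 - e) < E).
      { rewrite <- HV0. apply (V_inc2 b a c p1 p2); auto; lra. }
      assert (Vhi : E < Vpot b a c (M0 + e)).
      { rewrite <- HV0. apply (V_inc2 b a c p1 p2); auto; lra. }
      assert (La : locally c (fun c' => Vpot b a c' (M0 - e) < E)).
      { apply (loc_lt (fun c' => Vpot b a c' (M0 - e))); [apply Vc_deriv; lra| exact Vlo]. }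
      assert (Lb : locally c (fun c' => E < Vpot b a c' (M0 + e))).
      { apply (loc_gt (fun c' => Vpot b a c' (M0 + e))); [apply Vc_deriv; lra| exact Vhi]. }
      assert (Lc : locally c (fun c' => M0 + e < c')).
      { apply (loc_gt (fun x => x)); [apply ex_derive_id| lra]. }
      assert (Ld : locally c (fun c' => Rabs (c' - c) < eps / 2)) by (apply loc_near; lra).
      assert (Lq := openB b a E c p1 p2 (M0 - e) Hb W HE ltac:(lra)).
      eapply filter_imp; [| exact (filter_and _ _ Lq (filter_and _ _ Lbd (filter_and _ _ La
          (filter_and _ _ Lb (filter_and _ _ Lc Ld)))))].
      intros c' [[p1' [p2' [W' [Hq HE']]]] [Hbd' [Ha' [Hb' [Hc' Hd']]]]].
      destruct (Hmax c' p1' p2' W' HE' Hbd') as [[Hm1 Hm2] HV].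
      set (M' := phi a E c' 0) in *.
      assert (M0 - e < M').
      { destruct (Rlt_le_dec (M0 - e) M') as [ok|bad]; [exact ok|exfalso].
        destruct (Rle_lt_or_eq_dec _ _ bad) as [lt|eq].
        - pose proof (V_inc2 b a c' p1' p2' M' (M0 - e) Hb W' lt ltac:(lra) ltac:(lra)). lra.
        - rewrite eq in HV. lra. }
      assert (M' < M0 + e).
      { destruct (Rlt_le_dec M' (M0 + e)) as [ok|bad]; [exact ok|exfalso].
        destruct (Rle_lt_or_eq_dec _ _ bad) as [lt|eq].
        - pose proof (V_inc2 b a c' p1' p2' (M0 + e) M' Hb W' lt ltac:(lra) ltac:(lra)). lra.
        - rewrite <- eq in HV. lra. }
      apply Rabs_def2 in Hd'.
      unfold u. fold M'. fold M0. apply Rabs_def1; lra.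
    - assert (Hu0 : u c = c - M0) by reflexivity.
      rewrite Hu0.
      assert (HX : 2 * (Wf b a (c - M0) - E) = M0 ^ 2) by (rewrite Vpot_W in HV0; lra).
      assert (HI : is_derive (fun w => 2 * (Wf b a w - E)) (c - M0) (2 * (- (a / Rpower (c - M0) b)))).
      { apply is_derive_scal. eapply is_derive_ext; [| eapply is_derive_eq;
          [apply (is_derive_minus (Wf b a) (fun _ => E)); [apply DW; lra| apply is_derive_const]|]].
        - intros t. reflexivity.
        - unfold minus, plus, opp, zero; simpl. ring. }
      assert (HS : is_derive sqrt (2 * (Wf b a (c - M0) - E)) (/ (2 * sqrt (2 * (Wf b a (c - M0) - E))))).
      { apply is_derive_Reals. apply derivable_pt_lim_sqrt. rewrite HX. nra. }
      assert (HC := is_derive_comp sqrt (fun w => 2 * (Wf b a w - E)) (c - M0) _ _ HS HI).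
      eapply is_derive_eq.
      apply (is_derive_plus (fun w => w) (fun w => sqrt (2 * (Wf b a w - E)))). apply is_derive_id. exact HC.
      unfold plus, scal, one; simpl; unfold mult; simpl.
      rewrite HX. rewrite sqrt_pow2 by lra. unfold dV. field. split; [apply Rgt_not_eq, Rp_pos| lra].
    - unfold Rdiv. apply Rmult_integral_contrapositive; split. lra. apply Rinv_neq_0_compat. lra. }
  eapply is_derive_ext; [intros t; symmetry; apply mu_plus_eq|].
  eapply is_derive_eq.
  apply (is_derive_comp (fun w => a * Rpower w (- b)) u). apply DG0. unfold u; fold M0; lra.
  exact Hu.
  unfold scal; simpl; unfold mult; simpl. unfold u; fold M0. field. lra.
Qed.

Lemma om_c b a E c : is_derive (fun c' => omega1 b a E c') c ((b - 1) * c / Rpower a (1 / b)).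
Proof.
  pose proof (Rp_pos a (1 / b)). unfold omega1. auto_derive.
  - exact I.
  - simpl. field. apply Rgt_not_eq. lra.
Qed.

Lemma om_E b a E c : is_derive (fun E' => omega1 b a E' c) E ((b - 1) / Rpower a (1 / b)).
Proof.
  pose proof (Rp_pos a (1 / b)). unfold omega1. auto_derive.
  - exact I.
  - simpl. field. apply Rgt_not_eq. lra.
Qed.

Theorem lemmaA1 (b : R) (hb : 1 < b) (phi : R -> R -> R -> R -> R)
  (hphi : forall a E c, inB b a E c -> is_profile b a E c (phi a E c))
  (a E c : R) (hB : inB b a E c) :
  Derive_n (mu_of b a c (phi a E c)) 2 0 < 0 /\
  ex_derive (fun E' => mu_plus b phi a E' c) E /\
  ex_derive (fun c' => mu_plus b phi a E c') c /\
  Derive (fun E' => mu_plus b phi a E' c) E * Derive (fun c' => omega1 b a E c') c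
  - Derive (fun c' => mu_plus b phi a E c') c * Derive (fun E' => omega1 b a E' c) E > 0.
Proof.
  destruct (inB_wit _ _ _ _ hB) as [Hbd [p1 [p2 [W HE]]]].
  assert (HP := hphi a E c hB).
  split. { apply (part1 b a E c p1 p2); auto. }
  assert (D2 := part2 b a E c p1 p2 phi hb hphi W HE Hbd).
  assert (D3 := part3 b a E c p1 p2 phi hb hphi W HE Hbd).
  split. { eexists; exact D2. }
  split. { eexists; exact D3. }
  assert (E1 : Derive (fun E' => mu_plus b phi a E' c) E = a * b * Rpower (c - phi a E c 0) (- b - 1) / dV b a c (phi a E c 0)) by (apply is_derive_unique; exact D2).
  assert (E2 : Derive (fun c' => mu_plus b phi a E c') c = a * b * Rpower (c - phi a E c 0) (- b - 1) * phi a E c 0 / dV b a c (phi a E c 0)) by (apply is_derive_unique; exact D3).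
  assert (E3 : Derive (fun c' => omega1 b a E c') c = (b - 1) * c / Rpower a (1 / b)) by (apply is_derive_unique; apply om_c).
  assert (E4 : Derive (fun E' => omega1 b a E' c) E = (b - 1) / Rpower a (1 / b)) by (apply is_derive_unique; apply om_E).
  rewrite E1, E2, E3, E4.
  destruct (maxA b a E c p1 p2 (phi a E c) hb W HE HP) as [[HM1 HM2] HV0].
  pose proof W as (Hc & Ha & H1 & H2 & G1 & G2).
  set (M0 := phi a E c 0) in *.
  assert (Hdv : 0 < dV b a c M0).
  { rewrite dV_g by lra. apply Rdiv_lt_0_compat; [|apply Rp_pos].
    pose proof (gsign3 b a c p1 p2 M0 hb W ltac:(lra)). lra. }
  pose proof (Rp_pos a (1 / b)) as HA. pose proof (Rp_pos (c - M0) (- b - 1)) as HR.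
  set (A := Rpower a (1 / b)) in *. set (R1 := Rpower (c - M0) (- b - 1)) in *.
  set (D := dV b a c M0) in *.
  replace (a * b * R1 / D * ((b - 1) * c / A) - a * b * R1 * M0 / D * ((b - 1) / A))
    with ((a * b * R1 * (b - 1)) * (c - M0) / (D * A)) by (field; lra).
  apply Rdiv_lt_0_compat; [|nra].
  apply Rmult_lt_0_compat; [|lra].
  apply Rmult_lt_0_compat; [|lra]. apply Rmult_lt_0_compat; [|lra]. nra.
Qed.
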